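(* Let $R\subseteq\mathbb R$ be an archimedean real closed field, let $F$ be a formally real extension field of $R$, and let $\xi$ be an $\mathbb R$-place of $F$ with $\xi|_R=\mathrm{id}_R$; put $\overline F=\xi(F)\setminus\{\infty\}\subseteq\mathbb R$. Let $\xi_y$ be the constant extension of $\xi$ to $F(y)$, and for $\zeta\in M(R(y))$ let $\zeta_{\overline F}$ be the constant extension of $\zeta$ to $\overline F(y)$. Then the map $\iota:M(R(y))\to M(F(y))$, $\iota(\zeta)=\zeta_{\overline F}\circ\xi_y$, is a continuous injective map.
   Context: For a field $K$, $M(K)$ is the set of $\mathbb R$-places $K\to\mathbb R\cup\{\infty\}$, with topology generated by the subbasis $H'(b)=\{\zeta\in M(K)\mid \infty\ne\zeta(b)>0\}$, $b\in K$. The constant (Gauss) extension $\xi_y$ of $\xi$ to $F(y)$ is the place of $F(y)$ extending $\xi$ whose valuation is the Gauss valuation: on a polynomial $\sum c_iy^i\in F[y]$ with all $c_i$ in the valuation ring of $\xi$ it acts by applying $\xi$ to the coefficients, and its residue field is $\overline F(y)$. Every $\zeta\in M(R(y))$ is the identity on $R$; its constant extension $\zeta_{\overline F}$ is the unique $\mathbb R$-place of $\overline F(y)$ which is the identity on $\overline F$ and satisfies $\zeta_{\overline F}(y)=\zeta(y)$ (if $\zeta(y)=a\in R$ this is the place determined by $y-a$, if $\zeta(y)=\infty$ the place determined by $1/y$). $R(y)$, $F(y)$, $\overline F(y)$ are rational function fields in one variable $y$. *)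

(* Defs.v *)
From HB Require Import structures.
From mathcomp Require Import all_boot all_order all_algebra.
From mathcomp Require Import fraction.
From mathcomp Require Import reals.
Set Implicit Arguments. Unset Strict Implicit. Unset Printing Implicit Defensive.
Import Order.TTheory GRing.Theory Num.Theory.
Local Open Scope ring_scope.

(* Conventions.  A place  phi : K -> L u {oo}  is encoded as a function
   K -> option L, with  None  standing for  oo.                         *)

Definition ratfun (K : fieldType) := {fraction {poly K}}.
Definition pfrac (K : fieldType) (p : {poly K}) : ratfun K :=
  @FracField.tofrac _ p.
Definition yvar (K : fieldType) : ratfun K := pfrac 'X.
Definition cfrac (K : fieldType) (c : K) : ratfun K := pfrac c%:P.

(* phi is a place of the subfield S of K (S given as a predicate on K,
   the axioms only quantify over elements of S); values in L u {oo}.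
   The domain  {x | phi x <> oo}  is a subring on which phi is a ring
   morphism, and phi x = oo iff x <> 0 and phi (x^-1) = 0 (this makes the
   domain a valuation ring whose maximal ideal is the kernel of phi).   *)
Definition is_place_on (K L : fieldType) (S : K -> Prop) (phi : K -> option L)
  : Prop :=
  [/\ phi 1 = Some 1,
      forall x y a b, S x -> S y -> phi x = Some a -> phi y = Some b ->
        phi (x + y) = Some (a + b),
      forall x y a b, S x -> S y -> phi x = Some a -> phi y = Some b ->
        phi (x * y) = Some (a * b) &
      forall x, S x -> (phi x = None <-> (x != 0 /\ phi x^-1 = Some 0))].

Definition is_place (K L : fieldType) (phi : K -> option L) : Prop :=
  is_place_on (fun _ => True) phi.

(* M(K): the R-places of K, Rr playing the role of the real numbers. *)
Definition Mset (Rr : realType) (K : fieldType) (z : K -> option Rr) : Prop :=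
  is_place z.

Definition Hp (Rr : realType) (K : fieldType) (b : K) (z : K -> option Rr)
  : Prop := exists2 v, z b = Some v & 0 < v.

(* U (a subset of M(K)) is open for the topology generated by the H'(b):
   every point of U lies in a finite intersection of subbasic sets that is
   contained in U. *)
Definition Mopen (Rr : realType) (K : fieldType)
  (U : (K -> option Rr) -> Prop) : Prop :=
  forall z, Mset z -> U z ->
    exists bs : seq K, (forall b, b \in bs -> Hp b z) /\
      (forall z', Mset z' -> (forall b, b \in bs -> Hp b z') -> U z').

Definition Mcontinuous (Rr : realType) (K1 K2 : fieldType)
  (f : (K1 -> option Rr) -> (K2 -> option Rr)) : Prop :=
  forall b : K2, Mopen (fun z => Hp b (f z)).

Definition formally_real (F : fieldType) : Prop :=
  forall s : seq F, \sum_(x <- s) x ^+ 2 != -1.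

Definition Fbar (Rr : realType) (F : fieldType) (xi : F -> option Rr)
  (a : Rr) : Prop := exists x, xi x = Some a.

Definition Fbar_y (Rr : realType) (F : fieldType) (xi : F -> option Rr)
  (f : ratfun Rr) : Prop :=
  exists p q : {poly Rr}, [/\ forall i, Fbar xi p`_i, forall i, Fbar xi q`_i,
     q != 0 & f = pfrac p / pfrac q].

(* coefficientwise application of xi (only meaningful when all
   coefficients lie in the valuation ring of xi) *)
Definition xi_bar (Rr : realType) (F : fieldType) (xi : F -> option Rr)
  (p : {poly F}) : {poly Rr} := map_poly (fun c => odflt 0 (xi c)) p.

(* xiy is the constant (Gauss) extension of xi to F(y): a place of F(y)
   with values in Fbar(y) u {oo}, extending xi, acting coefficientwise on
   polynomials whose coefficients are in the valuation ring of xi. *)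
Definition is_const_ext (Rr : realType) (F : fieldType) (xi : F -> option Rr)
  (xiy : ratfun F -> option (ratfun Rr)) : Prop :=
  [/\ is_place xiy,
      forall f a, xiy f = Some a -> Fbar_y xi a,
      forall c : F, xiy (cfrac c) = omap (@cfrac Rr) (xi c) &
      forall p : {poly F}, (forall i, xi p`_i <> None) ->
        xiy (pfrac p) = Some (pfrac (xi_bar xi p))].

Definition is_const_ext_Fbar (Rr : realType) (R F : fieldType)
  (xi : F -> option Rr) (zeta : ratfun R -> option Rr)
  (zF : ratfun Rr -> option Rr) : Prop :=
  [/\ is_place_on (Fbar_y xi) zF,
      forall a, Fbar xi a -> zF (cfrac a) = Some a &
      zF (yvar Rr) = zeta (yvar R)].

Definition iota_map (Rr : realType) (R F : fieldType)
  (xiy : ratfun F -> option (ratfun Rr))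
  (Z : (ratfun R -> option Rr) -> ratfun Rr -> option Rr)
  (zeta : ratfun R -> option Rr) : ratfun F -> option Rr :=
  fun f => obind (Z zeta) (xiy f).

(* Main.v *)
Require Import Defs.
From HB Require Import structures.
From mathcomp Require Import all_boot all_order all_algebra.
From mathcomp Require Import fraction generic_quotient.
From mathcomp Require Import reals boolp polyrcf.
From mathcomp Require Import ring lra zify.
Import Order.TTheory GRing.Theory Num.Theory.
Local Open Scope ring_scope.

Section PlaceOn.
Variables (K L : fieldType) (S : K -> Prop) (phi : K -> option L).
Hypothesis Hphi : is_place_on S phi.
Hypothesis S0 : S 0.

Lemma pl1 : phi 1 = Some 1. Proof. by case: Hphi. Qed.
Lemma plD {x y a b} : S x -> S y -> phi x = Some a -> phi y = Some b ->
  phi (x + y) = Some (a + b).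
Proof. by case: Hphi => _ H _ _; apply: H. Qed.
Lemma plM {x y a b} : S x -> S y -> phi x = Some a -> phi y = Some b ->
  phi (x * y) = Some (a * b).
Proof. by case: Hphi => _ _ H _; apply: H. Qed.
Lemma plN {x} : S x -> (phi x = None <-> (x != 0 /\ phi x^-1 = Some 0)).
Proof. by case: Hphi => _ _ _ H; apply: H. Qed.

Lemma pl0 : phi 0 = Some 0.
Proof.
case E: (phi 0) => [a|]; last by move/(plN S0): E => [[]]; rewrite eqxx.
have := plD S0 S0 E E; rewrite addr0 E => -[h]; congr Some.
by apply: (addIr a); rewrite add0r -h.
Qed.

Lemma plV {x a} : S x -> S x^-1 -> phi x = Some a -> a != 0 -> phi x^-1 = Some a^-1.
Proof.
move=> Sx Sxi E a0.
have x0 : x != 0 by apply: contra_neq a0 => x0; move: E; rewrite x0 pl0 => -[].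
case E': (phi x^-1) => [b|].
  have := plM Sx Sxi E E'; rewrite mulfV // pl1 => -[h]; congr Some.
  by apply: (mulfI a0); rewrite mulfV // -h.
by move/(plN Sxi): E' => [_]; rewrite invrK E => -[]/eqP; rewrite (negbTE a0).
Qed.

Lemma plV0 {x} : S x -> phi x = None -> phi x^-1 = Some 0.
Proof. by move=> Sx /(plN Sx) []. Qed.

Lemma pl_div {x y P Q} : S x -> S y -> S x^-1 -> S y^-1 -> S (x / y) -> S (y * x^-1) ->
  phi x = Some P -> phi y = Some Q -> y != 0 -> (P != 0) || (Q != 0) ->
  phi (x / y) = if Q == 0 then None else Some (P / Q).
Proof.
move=> Sx Sy Sxi Syi Sxy Syx Ex Ey y0 PQ.
have [Q0|Q0] := eqVneq Q 0; last by apply: plM => //; apply: plV.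
move: PQ; rewrite Q0 eqxx orbF => P0.
have x0 : x != 0 by apply: contra_neq P0 => x0; move: Ex; rewrite x0 pl0 => -[].
apply/(plN Sxy); split; first by rewrite mulf_neq0 ?invr_eq0.
rewrite invf_div.
by rewrite (plM Sy Sxi Ey (plV Sx Sxi Ex P0)) Q0 mul0r.
Qed.
End PlaceOn.
Arguments pl1 {K L S phi} Hphi.
Arguments plD {K L S phi} Hphi {x y a b}.
Arguments plM {K L S phi} Hphi {x y a b}.
Arguments plN {K L S phi} Hphi {x}.
Arguments pl0 {K L S phi} Hphi S0.
Arguments plV {K L S phi} Hphi S0 {x a}.
Arguments plV0 {K L S phi} Hphi {x}.
Arguments pl_div {K L S phi} Hphi S0 {x y P Q}.

Section PlaceT.
Variables (K : fieldType) (L : realFieldType) (phi : K -> option L).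
Hypothesis Hphi : is_place phi.

Lemma plT_nat n : phi n%:R = Some n%:R.
Proof.
elim: n => [|n IH]; first by rewrite !mulr0n (pl0 Hphi I).
by rewrite -addn1 !natrD (plD Hphi _ _ IH (pl1 Hphi)).
Qed.

Lemma plT_neg1 : phi (-1) = Some (-1).
Proof.
case E: (phi (-1)) => [m|]; last first.
  by move/(plN Hphi (x:=-1) I): (E) => [_]; rewrite invrN invr1 E.
have := plD Hphi I I E (pl1 Hphi); rewrite addNr (pl0 Hphi I) => -[h].
by congr Some; apply: (addIr 1); rewrite -h addNr.
Qed.

Lemma plT_opp x a : phi x = Some a -> phi (- x) = Some (- a).
Proof. by move=> E; rewrite -mulN1r (plM Hphi _ _ plT_neg1 E) // mulN1r. Qed.

Lemma plT_sos x : phi (1 + x ^+ 2) <> Some 0.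
Proof.
case E: (phi x) => [t|].
  rewrite (plD Hphi _ _ (pl1 Hphi) (plM Hphi _ _ E E)) // -expr2 => -[].
  by apply/eqP; rewrite gt_eqF // (lt_le_trans ltr01) // lerDl sqr_ge0.
move/(plN Hphi (x:=x) I): E => [x0 Ei] h.
have := plM Hphi I I (plM Hphi I I Ei Ei) h.
have -> : x^-1 * x^-1 * (1 + x ^+ 2) = 1 + x^-1 * x^-1.
  by rewrite mulrDr mulr1 expr2 mulrACA mulVf // mulr1 addrC.
rewrite (plD Hphi _ _ (pl1 Hphi) (plM Hphi _ _ Ei Ei)) // !mulr0 addr0 => -[].
by apply/eqP; rewrite oner_neq0.
Qed.
End PlaceT.
Arguments plT_nat {K L phi} Hphi n.
Arguments plT_neg1 {K L phi} Hphi.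
Arguments plT_opp {K L phi} Hphi {x a}.
Arguments plT_sos {K L phi} Hphi x.

Lemma frac_rep (R : idomainType) (x : {fraction R}) :
  exists a b : R, b != 0 /\ x = (FracField.tofrac a) / (FracField.tofrac b).
Proof.
elim/quotW: x => r.
exists (\n_r), (\d_r); split; first exact: denom_ratioP.
rewrite /GRing.inv /GRing.mul /= !piE.
apply/eqmodP => /=.
rewrite FracField.equivfE /FracField.mulf /FracField.invf /=.
rewrite !numden_Ratio ?oner_neq0 ?denom_ratioP ?mulf_neq0 ?oner_neq0 ?denom_ratioP //.
by rewrite !mul1r !mulr1 mulrC.
Qed.

Section Ev.
Variables (K L M : fieldType) (f : {rmorphism K -> L}) (g : {rmorphism K -> M}).
Variables (S : L -> Prop) (phi : L -> option M).
Hypothesis Hphi : is_place_on S phi.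
Hypothesis SD : forall x y, S x -> S y -> S (x + y).
Hypothesis SM : forall x y, S x -> S y -> S (x * y).
Hypothesis SV : forall x, S x -> S x^-1.
Hypothesis Sf : forall c, S (f c).
Hypothesis phif : forall c, phi (f c) = Some (g c).
Variables (t : L) (a : M).
Hypothesis St : S t.
Hypothesis phit : phi t = Some a.

Lemma ev_S P : S (map_poly f P).[t].
Proof.
elim/poly_ind: P => [|P c IH]; first by rewrite rmorph0 horner0 -(rmorph0 f).
rewrite rmorphD rmorphM /= map_polyX map_polyC /= hornerMXaddC.
by apply: SD (Sf c); apply: SM.
Qed.

Lemma S0 : S 0. Proof. by rewrite -(rmorph0 f). Qed.

Lemma ev_phi P : phi (map_poly f P).[t] = Some (map_poly g P).[a].
Proof.
elim/poly_ind: P => [|P c IH].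
  by rewrite !rmorph0 !horner0 (pl0 Hphi S0).
rewrite !rmorphD !rmorphM /= !map_polyX !map_polyC /= !hornerMXaddC.

exact: (plD Hphi (SM _ _ (ev_S P) St) (Sf c) (plM Hphi (ev_S P) St IH phit) (phif c)).
Qed.

Lemma ev_div P Q u v : u * P + v * Q = 1 -> (map_poly f Q).[t] != 0 ->
  phi ((map_poly f P).[t] / (map_poly f Q).[t]) =
  if (map_poly g Q).[a] == 0 then None
  else Some ((map_poly g P).[a] / (map_poly g Q).[a]).
Proof.
move=> B Q0.
have h := congr1 (fun p => (map_poly g p).[a]) B; move: h => /=.
rewrite rmorphD !rmorphM rmorph1 hornerD !hornerM hornerC => h.
apply: (pl_div Hphi S0); rewrite ?ev_phi //.
1,2: exact: ev_S. 1,2: by apply/SV/ev_S. 1,2: by apply: SM; [apply: ev_S | apply/SV/ev_S].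
rewrite -negb_and; apply/negP => /andP[/eqP P0 /eqP Q0'].
by move: h; rewrite P0 Q0' !mulr0 addr0 => /eqP; rewrite eq_sym oner_eq0.
Qed.
End Ev.

Lemma rep_rev (K L : fieldType) (f : {rmorphism K -> L}) (y : L) (P : {poly K}) n :
  y != 0 -> (size P <= n)%N ->
  (map_poly f (\poly_(i < n) P`_(n - i.+1))).[y^-1] * y ^+ n.-1 = (map_poly f P).[y].
Proof.
move=> y0 sP.
rewrite (@horner_coef_wide _ n) ?size_map_poly ?size_poly //.
rewrite (@horner_coef_wide _ n (map_poly f P)) ?size_map_poly //.
rewrite mulr_suml (reindex_inj rev_ord_inj) /=.
apply: eq_bigr => i _.
rewrite !coef_map /= coef_poly /=.
have hi := ltn_ord i.
rewrite ifT; last by lia.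
have -> : (n - (n - i.+1).+1 = i)%N by lia.
rewrite -mulrA; congr (_ * _).
have -> : n.-1 = ((n - i.+1) + i)%N by lia.
by rewrite exprD exprVn mulrA mulVf ?mul1r // expf_neq0.
Qed.

Lemma rep_gen (K L : fieldType) (f : {rmorphism K -> L}) (y w : L) (P Q : {poly K}) (b : bool) :
  y != 0 -> (map_poly f Q).[y] != 0 -> w = (map_poly f P).[y] / (map_poly f Q).[y] ->
  exists P1 Q1 u v, [/\ u * P1 + v * Q1 = 1,
     (map_poly f Q1).[if b then y^-1 else y] != 0 &
     w = (map_poly f P1).[if b then y^-1 else y] / (map_poly f Q1).[if b then y^-1 else y]].
Proof.
move=> y0 Q0 ->.
have [P' [Q' [Q'0 ->]]] : exists P' Q', (map_poly f Q').[if b then y^-1 else y] != 0 /\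
    (map_poly f P).[y] / (map_poly f Q).[y] = (map_poly f P').[if b then y^-1 else y] / (map_poly f Q').[if b then y^-1 else y].
  case: b; last by exists P, Q.
  pose n := maxn (size P) (size Q).
  exists (\poly_(i < n) P`_(n - i.+1)), (\poly_(i < n) Q`_(n - i.+1)).
  rewrite -(@rep_rev _ _ f y P n y0 (leq_maxl (size P) (size Q))).
  rewrite -(@rep_rev _ _ f y Q n y0 (leq_maxr (size P) (size Q))) in Q0 *.
  split; first by move: Q0; rewrite mulf_eq0 negb_or => /andP[].
  by rewrite invfM mulrACA mulfV ?mulr1 // expf_neq0.
set t := if b then _ else _ in Q'0 *.
have Q'nz : Q' != 0 by apply: contra_neq Q'0 => ->; rewrite rmorph0 horner0.
have eP := divpK (dvdp_gcdl P' Q').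
have eQ := divpK (dvdp_gcdr P' Q').
have cop : coprimep (P' %/ gcdp P' Q') (Q' %/ gcdp P' Q').
  by apply: coprimep_div_gcd; rewrite Q'nz orbT.
have /Bezout_eq1_coprimepP [[u v] /= huv] := cop.
set G := gcdp P' Q' in eP eQ cop huv.
set A := P' %/ G in eP cop huv.
set B := Q' %/ G in eQ cop huv.
exists A, B, u, v.
have hQ : (map_poly f Q').[t] = (map_poly f B).[t] * (map_poly f G).[t].
  by rewrite -hornerM -rmorphM eQ.
have hP : (map_poly f P').[t] = (map_poly f A).[t] * (map_poly f G).[t].
  by rewrite -hornerM -rmorphM eP.
move: Q'0; rewrite hQ mulf_eq0 negb_or => /andP[h1 h2].
split => //.
rewrite hP.
by rewrite invfM mulrACA mulfV ?mulr1.
Qed.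

Definition cfm (K : fieldType) : {rmorphism K -> ratfun K} :=
  (@FracField.tofrac _ \o polyC).
Lemma cfmE (K : fieldType) (c : K) : cfm K c = cfrac c. Proof. by []. Qed.

Lemma ev_y (K : fieldType) (P : {poly K}) : (map_poly (cfm K) P).[yvar K] = pfrac P.
Proof.
rewrite /cfm map_poly_comp /yvar /pfrac horner_map; congr FracField.tofrac.
elim/poly_ind: P => [|P c IH]; first by rewrite rmorph0 horner0.
by rewrite rmorphD rmorphM /= map_polyX map_polyC /= hornerMXaddC IH.
Qed.

Lemma yvar_neq0 (K : fieldType) : yvar K != 0.
Proof. by rewrite /yvar /pfrac tofrac_eq0 polyX_eq0. Qed.

Section Csts.
Variables (R : archiRcfType) (Rr : realType) (zeta : ratfun R -> option Rr).
Hypothesis Hz : Mset zeta.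

Lemma cst_fin c : zeta (cfrac c) <> None.
Proof.
move=> E; move/(plN Hz (x:=cfrac c) I): (E) => [c0 Ei].
have c0' : c != 0 by apply: contra_neq c0 => ->; rewrite -cfmE rmorph0.
set d := c^-1.
have Ed : zeta (cfm R d) = Some 0 by rewrite fmorphV.
have c2 : 0 <= c ^+ 2 by rewrite sqr_ge0.
have hn := archi_boundP c2; set n := Num.Def.archi_bound _ in hn.
have e0 : 0 <= n%:R * d ^+ 2 - 1.
  have c2p : 0 < c ^+ 2 by rewrite lt_def sqrf_eq0 c0' sqr_ge0.
  by rewrite subr_ge0 /d exprVn ler_pdivlMr ?mul1r ?ltW.
set s := Num.sqrt (n%:R * d ^+ 2 - 1).
have es : 1 + s ^+ 2 = n%:R * d ^+ 2 by rewrite sqr_sqrtr // addrC subrK.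
apply: (plT_sos Hz (cfm R s)).
rewrite -rmorphXn -(rmorph1 (cfm R)) -rmorphD es rmorphM rmorph_nat rmorphXn expr2.
by rewrite (plM Hz I I (plT_nat Hz n) (plM Hz I I Ed Ed)) // !mulr0.
Qed.

Definition phiz (c : R) : Rr := let _ := Hz in odflt 0 (zeta (cfrac c)).

Lemma phizE c : zeta (cfrac c) = Some (phiz c).
Proof. by rewrite /phiz; case E: (zeta _) => //; have := cst_fin c; rewrite E. Qed.

Lemma phiz_zmod : zmod_morphism phiz.
Proof.
move=> x y; have := plD Hz I I (phizE x) (plT_opp Hz (phizE y)).
by rewrite -!cfmE -rmorphN -rmorphD cfmE phizE => -[].
Qed.

Lemma phiz_monoid : monoid_morphism phiz.
Proof.
split; first by have := phizE 1; rewrite -cfmE rmorph1 (pl1 Hz) => -[].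
move=> x y; have := plM Hz I I (phizE x) (phizE y).
by rewrite -!cfmE -rmorphM cfmE phizE => -[].
Qed.
End Csts.
Arguments phiz {R Rr zeta} Hz.
Arguments phizE {R Rr zeta} Hz c.
Arguments phiz_zmod {R Rr zeta} Hz.
Arguments phiz_monoid {R Rr zeta} Hz.
Arguments cst_fin {R Rr zeta} Hz c.

HB.instance Definition _ (R : archiRcfType) (Rr : realType) (zeta : ratfun R -> option Rr)
  (Hz : Mset zeta) := GRing.isZmodMorphism.Build R Rr (phiz Hz) (phiz_zmod Hz).
HB.instance Definition _ (R : archiRcfType) (Rr : realType) (zeta : ratfun R -> option Rr)
  (Hz : Mset zeta) := GRing.isMonoidMorphism.Build R Rr (phiz Hz) (phiz_monoid Hz).

Lemma rm_nonneg (R : rcfType) (Rr : realType) (f : {rmorphism R -> Rr}) x :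
  0 <= x -> 0 <= f x.
Proof. by move=> x0; rewrite -(sqr_sqrtr x0) rmorphXn sqr_ge0. Qed.

Lemma rm_le (R : rcfType) (Rr : realType) (f g : {rmorphism R -> Rr}) c :
  f c <= g c.
Proof.
rewrite leNgt; apply/negP => lt.
have [q] := rat_in_itvoo lt; rewrite in_itv /= => /andP[h1 h2].
have [cq|qc] := lerP c (ratr q).
  have := @rm_nonneg _ _ f (ratr q - c); rewrite subr_ge0 => /(_ cq).
  by rewrite rmorphB fmorph_rat subr_ge0 => /(lt_le_trans h2); rewrite ltxx.
have := @rm_nonneg _ _ g (c - ratr q); rewrite subr_ge0 (ltW qc) => /(_ isT).
by rewrite rmorphB fmorph_rat subr_ge0 => /(lt_le_trans h1); rewrite ltxx.
Qed.

Lemma cstE (R : archiRcfType) (Rr : realType) (emb : {rmorphism R -> Rr})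
  (zeta : ratfun R -> option Rr) (Hz : Mset zeta) c : zeta (cfrac c) = Some (emb c).
Proof.
rewrite (phizE Hz); congr Some; apply/eqP; rewrite eq_le.
by rewrite (@rm_le _ _ (phiz Hz) emb) (@rm_le _ _ emb (phiz Hz)).
Qed.

Definition fbarb {Rr : realType} {F : fieldType} {xi : F -> option Rr} (Hxi : Mset xi) : {pred Rr} :=
  fun a => `[< Fbar xi a >].

Lemma in_fbarb {Rr : realType} {F : fieldType} {xi : F -> option Rr} (Hxi : Mset xi) a :
  (a \in fbarb Hxi) <-> Fbar xi a.
Proof. by rewrite unfold_in /fbarb; split => [/asboolP|?]; [|apply/asboolP]. Qed.

Lemma fbar_closed {Rr : realType} {F : fieldType} {xi : F -> option Rr} (Hxi : Mset xi) :
  divring_closed (fbarb Hxi).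
Proof.
split.
- by apply/in_fbarb; exists 1; apply: (pl1 Hxi).
- move=> u v /in_fbarb [x Ex] /in_fbarb [y Ey]; apply/in_fbarb.
  by exists (x - y); apply: (plD Hxi I I Ex (plT_opp Hxi Ey)).
- move=> u v /in_fbarb [x Ex] /in_fbarb [y Ey]; apply/in_fbarb.
  have [->|v0] := eqVneq v 0; first by exists 0; rewrite invr0 mulr0 (pl0 Hxi I).
  by exists (x / y); apply: (plM Hxi I I Ex (plV Hxi I I I Ey v0)).
Qed.

HB.instance Definition _ (Rr : realType) (F : fieldType) (xi : F -> option Rr) (Hxi : Mset xi) :=
  GRing.isDivringClosed.Build Rr (fbarb Hxi) (fbar_closed Hxi).

Section SubB.
Variables (F : fieldType) (S : divringClosed F).
Inductive subB := mkB x & x \in S.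
Definition vB u := let: mkB x _ := u in x.
HB.instance Definition _ := [isSub for vB].
HB.instance Definition _ := [Choice of subB by <:].
HB.instance Definition _ := [SubChoice_isSubUnitRing of subB by <:].
HB.instance Definition _ := [SubNzRing_isSubComNzRing of subB by <:].
HB.instance Definition _ := [SubComUnitRing_isSubIntegralDomain of subB by <:].
HB.instance Definition _ := [SubIntegralDomain_isSubField of subB by <:].
End SubB.
Arguments subB {F} S.

Section FbarY.
Variables (Rr : realType) (F : fieldType) (xi : F -> option Rr) (Hxi : Mset xi).
Local Notation Kb := (subB (fbarb Hxi)).

Definition kf : {rmorphism Kb -> ratfun Rr} := cfm Rr \o val.
Definition kp (p : {poly Kb}) : ratfun Rr := pfrac (map_poly val p).

Lemma kpE p : kp p = (map_poly kf p).[yvar Rr].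
Proof. by rewrite /kf map_poly_comp ev_y. Qed.

Lemma kp_eq0 p : (kp p == 0) = (p == 0).
Proof. by rewrite /kp /pfrac tofrac_eq0 map_poly_eq0. Qed.

Lemma kpD p q : kp (p + q) = kp p + kp q.
Proof. by rewrite /kp /pfrac !rmorphD. Qed.
Lemma kpM p q : kp (p * q) = kp p * kp q.
Proof. by rewrite /kp /pfrac !rmorphM. Qed.
Lemma kp1 : kp 1 = 1.
Proof. by rewrite /kp /pfrac !rmorph1. Qed.

Lemma Fbar_yP w : Fbar_y xi w <-> exists p q, q != 0 /\ w = kp p / kp q.
Proof.
split.
  move=> [p [q [Hp Hq q0 ->]]].
  have lift : forall r : {poly Rr}, (forall i, Fbar xi r`_i) ->
      exists rK : {poly Kb}, map_poly val rK = r.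
    move=> r Hr; exists (\poly_(i < size r) insubd (0 : Kb) r`_i).
    apply/polyP => i; rewrite coef_map /= coef_poly.
    case: ltnP => hi; last by rewrite nth_default.
    by rewrite val_insubd; case: ifP => // /negP []; apply/in_fbarb.
  have [pK epK] := lift p Hp; have [qK eqK] := lift q Hq.
  exists pK, qK; split; last by rewrite /kp epK eqK.
  by apply: contra_neq q0 => qK0; rewrite -eqK qK0 rmorph0.
move=> [p [q [q0 ->]]].
exists (map_poly val p), (map_poly val q); split => //.
- by move=> i; rewrite coef_map /=; apply/in_fbarb; apply: valP.
- by move=> i; rewrite coef_map /=; apply/in_fbarb; apply: valP.
- by rewrite map_poly_eq0.
Qed.

Lemma FyD w1 w2 : Fbar_y xi w1 -> Fbar_y xi w2 -> Fbar_y xi (w1 + w2).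
Proof.
move=> /Fbar_yP [p1 [q1 [q10 ->]]] /Fbar_yP [p2 [q2 [q20 ->]]]; apply/Fbar_yP.
exists (p1 * q2 + p2 * q1), (q1 * q2); split; first by rewrite mulf_neq0.
by rewrite kpD !kpM addf_div ?kp_eq0.
Qed.

Lemma FyM w1 w2 : Fbar_y xi w1 -> Fbar_y xi w2 -> Fbar_y xi (w1 * w2).
Proof.
move=> /Fbar_yP [p1 [q1 [q10 ->]]] /Fbar_yP [p2 [q2 [q20 ->]]]; apply/Fbar_yP.
exists (p1 * p2), (q1 * q2); split; first by rewrite mulf_neq0.
by rewrite mulf_div !kpM.
Qed.

Lemma FyV w : Fbar_y xi w -> Fbar_y xi w^-1.
Proof.
move=> /Fbar_yP [p [q [q0 ->]]]; apply/Fbar_yP.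
have [->|p0] := eqVneq p 0.
  by exists 0, 1; split; rewrite ?oner_neq0 // /kp !rmorph0 !mul0r invr0.
by exists q, p; split; rewrite // invf_div.
Qed.

Lemma Fykf c : Fbar_y xi (kf c).
Proof.
apply/Fbar_yP; exists c%:P, 1; split; first exact: oner_neq0.
by rewrite kp1 divr1 /kp map_polyC.
Qed.

Lemma Fy0 : Fbar_y xi 0.
Proof. by rewrite -(rmorph0 kf); apply: Fykf. Qed.

Lemma Fyy : Fbar_y xi (yvar Rr).
Proof.
apply/Fbar_yP; exists 'X, 1; split; first exact: oner_neq0.
by rewrite kp1 divr1 /kp map_polyX.
Qed.
End FbarY.
Arguments kf {Rr F xi} Hxi.
Arguments kp {Rr F xi} Hxi p.
Arguments kpE {Rr F xi} Hxi p.
Arguments kp_eq0 {Rr F xi} Hxi p.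
Arguments Fbar_yP {Rr F xi} Hxi w.
Arguments FyD {Rr F xi} Hxi {w1 w2}.
Arguments FyM {Rr F xi} Hxi {w1 w2}.
Arguments FyV {Rr F xi} Hxi {w}.
Arguments Fykf {Rr F xi} Hxi c.
Arguments Fy0 {Rr F xi} Hxi.
Arguments Fyy {Rr F xi} Hxi.
Arguments ev_div {K L M f g S phi} Hphi SD SM SV Sf phif {t a} St phit {P Q u v}.

Section PlaceT2.
Variables (K : fieldType) (L : realFieldType) (phi : K -> option L).
Hypothesis Hphi : is_place phi.

Lemma plT_none_add x y b : phi x = None -> phi y = Some b -> phi (x + y) = None.
Proof.
move=> Ex Ey; case E: (phi (x + y)) => [m|] //.
by have := plD Hphi I I E (plT_opp Hphi Ey); rewrite addrK Ex.
Qed.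

Lemma plT_none_opp x : phi x = None -> phi (- x) = None.
Proof.
move=> Ex; case E: (phi (- x)) => [m|] //.
by have := plT_opp Hphi E; rewrite opprK Ex.
Qed.

Lemma plT_none_sq x : phi x = None -> phi (x ^+ 2) = None.
Proof.
move=> Ex; case E: (phi (x ^+ 2)) => [m|] //.
move/(plN Hphi (x:=x) I): (Ex) => [x0 Exi].
by have := plM Hphi I I E Exi; rewrite expr2 mulfK // Ex.
Qed.
End PlaceT2.
Arguments plT_none_add {K L phi} Hphi {x y b}.
Arguments plT_none_opp {K L phi} Hphi {x}.
Arguments plT_none_sq {K L phi} Hphi {x}.

Theorem theorem6p2
  (Rr : realType)                       (* the real numbers *)
  (R : archiRcfType) (emb : {rmorphism R -> Rr})   (* R ⊆ ℝ *)
  (F : fieldType) (iF : {rmorphism R -> F})        (* F ⊇ R *)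
  (HF : formally_real F)
  (xi : F -> option Rr) (Hxi : Mset xi)
  (HxiR : forall r : R, xi (iF r) = Some (emb r))
  (xiy : ratfun F -> option (ratfun Rr)) (Hxiy : is_const_ext xi xiy)
  (Z : (ratfun R -> option Rr) -> ratfun Rr -> option Rr)
  (HZ : forall zeta, Mset zeta -> is_const_ext_Fbar xi zeta (Z zeta)) :
  [/\ forall zeta, Mset zeta -> Mset (iota_map xiy Z zeta),
      forall zeta1 zeta2, Mset zeta1 -> Mset zeta2 ->
        iota_map xiy Z zeta1 =1 iota_map xiy Z zeta2 -> zeta1 =1 zeta2 &
      Mcontinuous (iota_map xiy Z)].
Proof.
case: Hxiy => Hxp Hxval Hxc Hxpoly.
have yFmap : xiy (yvar F) = Some (yvar Rr).
  have hX : xi_bar xi 'X = 'X.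
    apply/polyP => i; rewrite /xi_bar coef_map_id0 ?(pl0 Hxi I) // !coefX.
    by case: (i == 1%N); rewrite /= ?mulr1n ?mulr0n ?(pl1 Hxi) ?(pl0 Hxi I).
  rewrite /yvar Hxpoly ?hX //.
  by move=> i; rewrite coefX; case: (i == 1%N); rewrite /= ?mulr1n ?mulr0n ?(pl1 Hxi) ?(pl0 Hxi I).
split.
- move=> zeta Hz; have [HZz HZc HZy] := HZ zeta Hz.
  rewrite /Mset /is_place /iota_map; split.
  + by rewrite (pl1 Hxp) /= (pl1 HZz).
  + move=> x y a b _ _; case Ex: (xiy x) => [u|] //= Eu; case Ey: (xiy y) => [w|] //= Ew.
    by rewrite (plD Hxp I I Ex Ey) /= (plD HZz (Hxval _ _ Ex) (Hxval _ _ Ey) Eu Ew).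
  + move=> x y a b _ _; case Ex: (xiy x) => [u|] //= Eu; case Ey: (xiy y) => [w|] //= Ew.
    by rewrite (plM Hxp I I Ex Ey) /= (plM HZz (Hxval _ _ Ex) (Hxval _ _ Ey) Eu Ew).
  + move=> x _; split.
    * case Ex: (xiy x) => [u|] /= Eu.
        have Su := Hxval _ _ Ex.
        move/(plN HZz Su): Eu => [u0 Eui].
        have x0 : x != 0.
          by apply: contra_neq u0 => x0; move: Ex; rewrite x0 (pl0 Hxp I) => -[<-].
        by split => //; rewrite (plV Hxp I I I Ex u0) /=.
      move/(plN Hxp (x:=x) I): (Ex) => [x0 Exi]; split => //.
      by rewrite Exi /= (pl0 HZz (Fy0 Hxi)).
    * move=> [x0]; case Exi: (xiy x^-1) => [w|] //= Ew.
      case Ex: (xiy x) => [u|] //=.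
      case Eu: (Z zeta u) => [c|] //.
      have := plM HZz (Hxval _ _ Ex) (Hxval _ _ Exi) Eu Ew.
      have := plM Hxp I I Ex Exi; rewrite mulfV // (pl1 Hxp) => -[<-].
      by rewrite (pl1 HZz) mulr0 => -[]/eqP; rewrite oner_eq0.
- move=> z1 z2 H1 H2 Hi w.
  have ey : z1 (yvar R) = z2 (yvar R).
    have := Hi (yvar F); rewrite /iota_map yFmap /=.
    by case: (HZ z1 H1) (HZ z2 H2) => _ _ -> [_ _ ->].
  have [P [Q [Q0 ->]]] := frac_rep _ w.
  have Qy : (map_poly (cfm R) Q).[yvar R] != 0 by rewrite ev_y /pfrac tofrac_eq0.
  have ew : FracField.tofrac P / FracField.tofrac Q =
      (map_poly (cfm R) P).[yvar R] / (map_poly (cfm R) Q).[yvar R] by rewrite !ev_y.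
  have [P1 [Q1 [u [v [huv hQ1 ->]]]]] :=
    @rep_gen _ _ (cfm R) _ _ _ _ (z1 (yvar R) == None) (yvar_neq0 R) Qy ew.
  set t := if _ then _ else _ in hQ1 *.
  have [c [E1 E2]] : exists c, z1 t = Some c /\ z2 t = Some c.
    rewrite /t; case E: (z1 (yvar R)) => [a|] /=.
      by exists a; rewrite -ey E.
    exists 0; split; first exact: (plV0 H1 I E).
    by rewrite ey in E; exact: (plV0 H2 I E).
  have ev : forall zeta (Hz : Mset zeta), zeta t = Some c ->
      zeta ((map_poly (cfm R) P1).[t] / (map_poly (cfm R) Q1).[t]) =
      if (map_poly emb Q1).[c] == 0 then None
      else Some ((map_poly emb P1).[c] / (map_poly emb Q1).[c]).
    move=> zeta Hz Ez.
    exact: (ev_div (f := cfm R) (g := emb) Hz (fun _ _ _ _ => I) (fun _ _ _ _ => I) (fun _ _ => I) (fun _ => I) (@cstE _ _ emb _ Hz) I Ez huv hQ1).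
  by rewrite (ev z1 H1 E1) (ev z2 H2 E2).
- move=> b zeta Hz [v0 Ev v0pos].
  move: Ev; rewrite /iota_map; case Exb: (xiy b) => [w|] //= Ew.
  have Sw := Hxval _ _ Exb.
  have [pK [qK [qK0 ew]]] := (proj1 (Fbar_yP Hxi w) Sw).
  have Qy : (map_poly (kf Hxi) qK).[yvar Rr] != 0 by rewrite -kpE kp_eq0.
  rewrite !kpE in ew.
  set bb := zeta (yvar R) == None.
  have [P1 [Q1 [u [v [huv hQ1 ew1]]]]] :=
    @rep_gen _ _ (kf Hxi) _ _ _ _ bb (yvar_neq0 Rr) Qy ew.
  set tRr := (if bb then _ else _) in hQ1 ew1.
  pose tR := if bb then (yvar R)^-1 else yvar R.
  have StRr : Fbar_y xi tRr.
    by have [hb|hb] := boolP bb; rewrite /tRr ?hb ?(negbTE hb); [apply: (FyV Hxi) |]; apply: Fyy.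
  have tZ : forall zeta', Mset zeta' -> forall x, zeta' tR = Some x -> Z zeta' tRr = Some x.
    move=> z' Hz' x; have [HZz HZc HZy] := HZ z' Hz'.
    have [hb|hb] := boolP bb; rewrite /tR /tRr ?hb ?(negbTE hb); last by rewrite HZy.
    case E: (z' (yvar R)) => [a|] Ex.
      have a0 : a != 0.
        apply/eqP => a0; have := plM Hz' I I E Ex.
        by rewrite mulfV ?yvar_neq0 // (pl1 Hz') a0 mul0r => -[]/eqP; rewrite oner_eq0.
      have HZy' : Z z' (yvar Rr) = Some a by rewrite HZy E.
      rewrite (plV HZz (Fy0 Hxi) (Fyy Hxi) (FyV Hxi (Fyy Hxi)) HZy' a0).
      rewrite (plV Hz' I I I E a0) in Ex; by case: Ex => ->.
    rewrite (plV0 Hz' I E) in Ex; case: Ex => <-.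
    by apply: (plV0 HZz (Fyy Hxi)); rewrite HZy.
  have [c Ec] : exists c, zeta tR = Some c.
    rewrite /tR /bb; case E: (zeta (yvar R)) => [a|] /=; first by exists a.
    by exists 0; apply: (plV0 Hz I E).
  have evZ : forall zeta', Mset zeta' -> forall x, Z zeta' tRr = Some x ->
      Z zeta' w = if (map_poly val Q1).[x] == 0 then None
         else Some ((map_poly val P1).[x] / (map_poly val Q1).[x]).
    move=> z' Hz' x Ex; have [HZz HZc HZy] := HZ z' Hz'.
    have phif : forall c', Z z' (kf Hxi c') = Some (val c').
      by move=> c'; apply: HZc; apply/in_fbarb; apply: valP.
    rewrite ew1; exact: (ev_div (f := kf Hxi) (g := val) HZz (fun x y => FyD Hxi)
       (fun x y => FyM Hxi) (fun x => FyV Hxi) (Fykf Hxi) phif StRr Ex huv hQ1).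
  set P' := map_poly val P1 in evZ; set Q' := map_poly val Q1 in evZ.
  have := evZ zeta Hz c (tZ zeta Hz c Ec); rewrite Ew.
  case: eqP => // Qc0 [vE].
  have PQc : 0 < (P' * Q').[c].
    have -> : (P' * Q').[c] = v0 * Q'.[c] ^+ 2.
      by rewrite hornerM vE expr2 mulrA mulfVK //; apply/eqP.
    by rewrite mulr_gt0 // exprn_even_gt0 //=; apply/eqP.
  have [d d0 hd] := poly_cont c (P' * Q') PQc.
  have [q1 /andP[hq1a hq1b]] : exists q, (c - d / 2 < ratr q) && (ratr q < c).
    have [q hq] := @rat_in_itvoo Rr (c - d / 2) c ltac:(lra).
    by exists q; rewrite in_itv /= in hq.
  set r1 : Rr := ratr q1 in hq1a hq1b.
  have [q2 /andP[hq2a hq2b]] : exists q, ((c - r1) ^+ 2 < ratr q) && (ratr q < (d / 2) ^+ 2).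
    have [q hq] := @rat_in_itvoo Rr ((c - r1) ^+ 2) ((d / 2) ^+ 2) ltac:(nra).
    by exists q; rewrite in_itv /= in hq.
  set r2 : Rr := ratr q2 in hq2a hq2b.
  pose B : ratfun R := cfm R (ratr q2) - (tR - cfm R (ratr q1)) ^+ 2.
  have hconst : forall z' : ratfun R -> option Rr, Mset z' -> forall q, z' (cfm R (ratr q)) = Some (ratr q).
    by move=> z' Hz' q; have := @cstE _ _ emb _ Hz' (ratr q); rewrite fmorph_rat.
  have hB : forall z' : ratfun R -> option Rr, Mset z' -> forall x, z' tR = Some x -> z' B = Some (r2 - (x - r1) ^+ 2).
    move=> z' Hz' x Ex; rewrite /B.
    apply: (plD Hz' I I (hconst z' Hz' q2)); apply: (plT_opp Hz'); rewrite !expr2.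
    have Ed := plD Hz' I I Ex (plT_opp Hz' (hconst z' Hz' q1)).
    by rewrite (plM Hz' I I Ed Ed).
  exists [:: B]; split.
    move=> b'; rewrite inE => /eqP ->; exists (r2 - (c - r1) ^+ 2).
      exact: hB zeta Hz c Ec.
    by rewrite subr_gt0.
  move=> z' Hz' /(_ B (mem_head _ _)) [s Es s0].
  have [x Ex] : exists x, z' tR = Some x.
    case Et: (z' tR) => [x|]; first by exists x.
    exfalso; move: Es; rewrite /B.
    have h1 : z' (tR - cfm R (ratr q1)) = None :=
      plT_none_add Hz' Et (plT_opp Hz' (hconst z' Hz' q1)).
    by rewrite addrC (plT_none_add Hz' (plT_none_opp Hz' (plT_none_sq Hz' h1)) (hconst z' Hz' q2)).
  move: Es; rewrite (hB z' Hz' x Ex) => -[sE].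
  have hx : `|x - c| < d.
    rewrite -sE subr_gt0 in s0.
    have h2 : (x - r1) ^+ 2 < (d / 2) ^+ 2 by apply: lt_trans hq2b.
    rewrite ltr_norml; apply/andP; split; nra.
  have := hd x hx; rewrite ltr_norml => /andP[h3 _].
  have PQx : 0 < (P' * Q').[x] by lra.
  have Qx : Q'.[x] != 0.
    by apply: contraTneq PQx => Qx0; rewrite hornerM Qx0 mulr0 ltxx.
  rewrite /Hp /iota_map Exb /= (evZ z' Hz' x (tZ z' Hz' x Ex)) (negbTE Qx).
  exists (P'.[x] / Q'.[x]) => //.
  have -> : P'.[x] / Q'.[x] = (P' * Q').[x] / Q'.[x] ^+ 2.
    by rewrite hornerM expr2 invfM mulrA mulfK.
  by rewrite divr_gt0 // exprn_even_gt0.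
Qed.
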